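(* Let $\mathfrak p\in\mathcal F^*$ and let $N$ be an $R$-module with $\mathfrak pN=0$. Then: (a) $N$ is $\mathcal F$-torsion-free if and only if $N$ is torsion-free as a module over the domain $R/\mathfrak p$; (b) $N$ is $\mathcal F$-divisible if and only if $N$ is divisible as a module over the domain $R/\mathfrak p$.
   Context: Throughout, $R$ is a commutative Noetherian local ring and $\mathcal F$ is a Gabriel topology on $R$: a nonempty set of ideals of $R$ such that (1) if $\mathfrak a\in\mathcal F$ and $\mathfrak a\subseteq\mathfrak b$ then $\mathfrak b\in\mathcal F$; (2) if $\mathfrak a,\mathfrak b\in\mathcal F$ then $\mathfrak a\cap\mathfrak b\in\mathcal F$; (3) if $\mathfrak b$ is an ideal and there is $\mathfrak a\in\mathcal F$ with $(\mathfrak b:r)\in\mathcal F$ for all $r\in\mathfrak a$, then $\mathfrak b\in\mathcal F$. For an $R$-module $X$ and ideal $\mathfrak a$, $X[\mathfrak a]=\{x\in X:\mathfrak a x=0\}$. $X$ is $\mathcal F$-torsion-free if $X[\mathfrak a]=0$ for all $\mathfrak a\in\mathcal F$, and $\mathcal F$-divisible if $\mathfrak aX=X$ for all $\mathfrak a\in\mathcal F$. $\mathcal F^*$ denotes the set of maximal elements (under inclusion) of $\mathrm{Spec}(R)\setminus\mathcal F$. Over a domain $D$, a module $X$ is torsion-free if no nonzero element of $D$ annihilates a nonzero element of $X$, and divisible if $dX=X$ for all $0\ne d\in D$. *)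

(* Defs.v *)
From mathcomp Require Import all_boot all_order all_algebra.
Set Implicit Arguments. Unset Strict Implicit. Unset Printing Implicit Defensive.
Import GRing.Theory.
Local Open Scope ring_scope.

Section Defs.
Variable R : comNzRingType.

Definition ideal_sub (a b : R -> Prop) : Prop := forall x, a x -> b x.

Definition is_ideal (a : R -> Prop) : Prop :=
  a 0 /\ (forall x y, a x -> a y -> a (x + y)) /\ (forall r x, a x -> a (r * x)).

Definition is_prime_ideal (p : R -> Prop) : Prop :=
  is_ideal p /\ ~ p 1 /\ (forall x y, p (x * y) -> p x \/ p y).

Definition is_maximal_ideal (m : R -> Prop) : Prop :=
  is_ideal m /\ ~ m 1 /\
  (forall b, is_ideal b -> ~ b 1 -> ideal_sub m b -> ideal_sub b m).

Definition noetherian : Prop :=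
  forall I : nat -> R -> Prop, (forall n, is_ideal (I n)) ->
    (forall n, ideal_sub (I n) (I n.+1)) ->
    exists n, forall m, (n <= m)%N -> ideal_sub (I m) (I n).

Definition local_ring : Prop :=
  exists m, is_maximal_ideal m /\
    forall m', is_maximal_ideal m' -> ideal_sub m' m /\ ideal_sub m m'.

Definition ideal_cap (a b : R -> Prop) : R -> Prop := fun x => a x /\ b x.
Definition colon (b : R -> Prop) (r : R) : R -> Prop := fun x => b (x * r).

Definition gabriel_topology (F : (R -> Prop) -> Prop) : Prop :=
  (exists a, F a) /\
  (forall a, F a -> is_ideal a) /\
  (forall a b, F a -> is_ideal b -> ideal_sub a b -> F b) /\
  (forall a b, F a -> F b -> F (ideal_cap a b)) /\
  (forall a b, is_ideal b -> F a -> (forall r, a r -> F (colon b r)) -> F b).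

Definition Fstar (F : (R -> Prop) -> Prop) (p : R -> Prop) : Prop :=
  is_prime_ideal p /\ ~ F p /\
  (forall q, is_prime_ideal q -> ~ F q -> ideal_sub p q -> ideal_sub q p).

Variable M : lmodType R.

Definition annih (a : R -> Prop) (x : M) : Prop := forall r, a r -> r *: x = 0.

Definition F_torsion_free (F : (R -> Prop) -> Prop) : Prop :=
  forall a, F a -> forall x : M, annih a x -> x = 0.

Definition ideal_mod (a : R -> Prop) (x : M) : Prop :=
  exists s : seq (R * M), (forall u, u \in s -> a u.1) /\
    x = \sum_(u <- s) u.1 *: u.2.

Definition F_divisible (F : (R -> Prop) -> Prop) : Prop :=
  forall a, F a -> forall x : M, ideal_mod a x.

(* For p with pM = 0, M is an R/p-module via (r + p) . x = r *: x.
   Nonzero elements of R/p are the classes of r with ~ p r. *)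
Definition killed_by (p : R -> Prop) : Prop := forall r, p r -> forall x : M, r *: x = 0.

Definition quot_torsion_free (p : R -> Prop) : Prop :=
  forall r, ~ p r -> forall x : M, r *: x = 0 -> x = 0.

Definition quot_divisible (p : R -> Prop) : Prop :=
  forall r, ~ p r -> forall x : M, exists y : M, r *: y = x.

End Defs.

(* Main.v *)
Require Import Defs.
From mathcomp Require Import all_boot all_order all_algebra.
From mathcomp Require Import ring.
From Stdlib Require Import Classical ClassicalEpsilon.
Import GRing.Theory.
Local Open Scope ring_scope.

Section Aux.
Context {R : comNzRingType}.

Lemma exists_max (P : (R -> Prop) -> Prop) (a0 : R -> Prop) :
  noetherian R -> (forall b, P b -> is_ideal b) -> P a0 ->
  exists b, P b /\ forall c, P c -> ideal_sub b c -> ideal_sub c b.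
Proof.
move=> Hn Hid Pa0.
apply: NNPP => Hno.
have step : forall bs : {b | P b}, {c | P c /\ ideal_sub (proj1_sig bs) c /\
                                     ~ ideal_sub c (proj1_sig bs)}.
  move=> [b Pb]; apply: constructive_indefinite_description.
  apply: NNPP => H; apply: Hno; exists b; split => // c Pc Hbc.
  apply: NNPP => Hcb; apply: H; exists c; split => //.
pose next (bs : {b | P b}) : {b | P b} :=
  exist _ (proj1_sig (step bs)) (proj1 (proj2_sig (step bs))).
pose I n := proj1_sig (iter n next (exist _ a0 Pa0)).
have HI : forall n, is_ideal (I n) by move=> n; apply: Hid; exact: proj2_sig.
have HS : forall n, ideal_sub (I n) (I n.+1).
  move=> n; rewrite /I /=; exact: (proj1 (proj2 (proj2_sig (step _)))).
have [n Hn'] := Hn I HI HS.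
have := Hn' n.+1 (leqnSn n).
rewrite /I /=; exact: (proj2 (proj2 (proj2_sig (step _)))).
Qed.

Definition addgen (b : R -> Prop) (x : R) : R -> Prop :=
  fun z => exists s t, b s /\ z = s + t * x.

Lemma addgen_ideal (b : R -> Prop) (x : R) : is_ideal b -> is_ideal (addgen b x).
Proof.
move=> [b0 [bD bM]]; split; [|split].
- by exists 0, 0; split => //; rewrite mul0r addr0.
- move=> u v [s [t [bs ->]]] [s' [t' [bs' ->]]].
  exists (s + s'), (t + t'); split; [exact: bD|]; ring.
- move=> r u [s [t [bs ->]]]; exists (r * s), (r * t); split; [exact: bM|]; ring.
Qed.

Lemma addgen_sub (b : R -> Prop) (x : R) : is_ideal b -> ideal_sub b (addgen b x).
Proof. by move=> _ s bs; exists s, 0; split => //; rewrite mul0r addr0. Qed.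

Lemma addgen_x (b : R -> Prop) (x : R) : is_ideal b -> addgen b x x.
Proof. move=> [b0 _]; by exists 0, 1; split => //; rewrite add0r mul1r. Qed.

Lemma colon_ideal (b : R -> Prop) (z : R) : is_ideal b -> is_ideal (colon b z).
Proof.
move=> [b0 [bD bM]]; rewrite /colon; split; [|split].
- by rewrite mul0r.
- by move=> u v Hu Hv; rewrite mulrDl; apply: bD.
- by move=> r u Hu; rewrite -mulrA; apply: bM.
Qed.

Lemma core (F : (R -> Prop) -> Prop) (p : R -> Prop) :
  noetherian R -> gabriel_topology F -> Fstar F p ->
  forall a, is_ideal a -> ideal_sub p a -> (exists r, a r /\ ~ p r) -> F a.
Proof.
move=> Hn [[c Fc] [Fid [Fup [Fcap Fcol]]]] [pP [npF pmax]] a Ia pa [r [ar npr]].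
apply: NNPP => nFa.
pose P b := is_ideal b /\ ideal_sub a b /\ ~ F b.
have [b [[Ib [ab nFb]] bmax]] := @exists_max P a Hn (fun b H => proj1 H)
   (conj Ia (conj (fun x h => h) nFa)).
have Ib' := Ib; move: Ib' => [b0 [bD bM]].
have FX : forall x, ~ b x -> F (addgen b x).
  move=> x nbx; apply: NNPP => nF.
  have := bmax (addgen b x) (conj (@addgen_ideal b x Ib)
    (conj (fun z h => @addgen_sub b x Ib z (ab z h)) nF)) (@addgen_sub b x Ib).
  by move=> H; apply: nbx; apply: H; apply: addgen_x.
have bprime : is_prime_ideal b.
  split => //; split.
  - move=> b1; apply: nFb; apply: (Fup c) => // z _.
    by have := bM z 1 b1; rewrite mulr1.
  - move=> x y bxy; apply: NNPP => H.
    have nbx : ~ b x by move=> h; apply: H; left.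
    have nby : ~ b y by move=> h; apply: H; right.
    apply: nFb; apply: (Fcol (addgen b x)) => //; first exact: FX.
    move=> z [s [t [bs ->]]].
    apply: (Fup (addgen b y)); [exact: FX|exact: colon_ideal|].
    move=> w [s' [t' [bs' ->]]]; rewrite /colon.
    have -> : (s' + t' * y) * (s + t * x) =
      (s + t * x) * s' + (t' * y) * s + (t' * t) * (x * y) by ring.
    have [_ [bD2 bM2]] := Ib.
    apply bD2; [apply bD2; [apply bM2; exact: bs'|apply bM2; exact: bs]|apply bM2; exact: bxy].
have := pmax b bprime nFb (fun z h => ab z (pa z h)).
by move=> H; apply: npr; apply: H; apply: ab.
Qed.

End Aux.

Theorem lemma1p2 (R : comNzRingType) (F : (R -> Prop) -> Prop) (M : lmodType R)
  (p : R -> Prop) :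
  noetherian R -> local_ring R -> gabriel_topology F ->
  Fstar F p -> killed_by M p ->
  (F_torsion_free M F <-> quot_torsion_free M p) /\
  (F_divisible M F <-> quot_divisible M p).
Proof.
move=> Hn _ HF HFs Hk.
have HF' := HF; move: HF' => [_ [Fid [Fup _]]].
have HFs' := HFs; move: HFs' => [[Ip _] [npF _]].
have Fa : forall r, ~ p r -> F (addgen p r).
  move=> r npr; apply: (@core R F p Hn HF HFs); first exact: addgen_ideal.
    exact: addgen_sub.
  by exists r; split => //; apply: addgen_x.
have notsub : forall a, F a -> exists r, a r /\ ~ p r.
  move=> a Fa'; apply: NNPP => H; apply: npF; apply: (Fup a) => // z az.
  by apply: NNPP => npz; apply: H; exists z.
split; split.
- move=> Htf r npr x rx; apply: (Htf _ (Fa r npr)).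
  move=> z [s [t [ps ->]]]; by rewrite scalerDl Hk // add0r -scalerA rx scaler0.
- move=> Hq a Fa' x ax; have [r [ar npr]] := notsub a Fa'.
  by apply: (Hq r npr); apply: ax.
- move=> Hd r npr x; have [l [Hl ->]] := Hd _ (Fa r npr) x.
  elim: l Hl => [|u l IH] Hl.
    by exists 0; rewrite big_nil scaler0.
  have [y Hy] : exists y, r *: y = \sum_(v <- l) v.1 *: v.2.
    by apply: IH => v vl; apply: Hl; rewrite in_cons vl orbT.
  have [s [t [ps Hu]]] := Hl u (mem_head u l).
  exists (t *: u.2 + y); rewrite big_cons -Hy Hu scalerDl (Hk s ps) add0r.
  by rewrite scalerDr !scalerA mulrC.
- move=> Hq a Fa' x; have [r [ar npr]] := notsub a Fa'.
  have [y <-] := Hq r npr x.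
  exists [:: (r, y)]; split.
    by move=> u; rewrite inE => /eqP ->.
  by rewrite big_cons big_nil addr0.
Qed.
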